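(* Let $(\mathbb{X},\mathbb{0},\mathbb{1},\oplus,\otimes)$ be a selective idempotent semifield with real powers (as described in the context). Let $M,N$ be positive integers, let $x_{1},\ldots,x_{M}$ and $y_{1},\ldots,y_{M}$ be nonzero elements of $\mathbb{X}$, and let $\bm{p}=(p_{1},\ldots,p_{N})^{T}\in\mathbb{R}^{N}$. Define $\bm{y}=(y_{1},\ldots,y_{M})^{T}$, the $M\times N$ matrix $\bm{X}(\bm{p})$ with entries $(\bm{X}(\bm{p}))_{ij}=x_{i}^{p_{j}}$, the scalar $$\Delta(\bm{p})=\bigl(\bm{X}(\bm{p})(\bm{y}^{-}\bm{X}(\bm{p}))^{-}\bigr)^{-}\bm{y},$$ and the functions of a real variable $p$ $$\varphi(p)=\bigoplus_{k=1}^{M}y_{k}^{-1}x_{k}^{p},\qquad \varphi_{i}(p)=y_{i}x_{i}^{-p}\varphi(p),\quad i=1,\ldots,M.$$ Then $$\Delta(\bm{p})=\bigoplus_{i=1}^{M}\min_{1\leq j\leq N}\varphi_{i}(p_{j})=\min_{(I_{1},\ldots,I_{N})}\bigoplus_{j=1}^{N}\bigoplus_{i\in I_{j}}\varphi_{i}(p_{j}),$$ where the last minimum is taken over all ordered partitions $(I_{1},\ldots,I_{N})$ of $\{1,\ldots,M\}$ into $N$ parts (empty parts allowed), and empty sums are interpreted as $\mathbb{0}$.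
   Context: A tropical (idempotent) semifield is a set $\mathbb{X}$ with operations $\oplus,\otimes$, zero $\mathbb{0}$ and identity $\mathbb{1}$ such that $(\mathbb{X},\mathbb{0},\oplus)$ is a commutative idempotent monoid ($x\oplus x=x$), $(\mathbb{X}\setminus\{\mathbb{0}\},\mathbb{1},\otimes)$ is an abelian group, and $\otimes$ distributes over $\oplus$; the product $x\otimes y$ is written $xy$ and $x^{-1}$ denotes the multiplicative inverse of $x\neq\mathbb{0}$. The semifield is assumed selective ($x\oplus y\in\{x,y\}$), so the order $x\leq y\iff x\oplus y=y$ is total; $\oplus$ is the maximum with respect to this order, and $\min$ denotes the corresponding minimum. Powers $x^{r}$ of nonzero $x$ are defined for all real exponents $r$ (iterated products for integers, unique roots for rationals, extended to reals), with $x^{0}=\mathbb{1}$. Matrix and vector operations are defined by the usual formulas with $\oplus,\otimes$ in place of $+,\times$: $(\bm{A}\bm{C})_{ij}=\bigoplus_{k}a_{ik}c_{kj}$. For a nonzero column vector $\bm{x}=(x_{i})$, its conjugate is the row vector $\bm{x}^{-}=(x_{i}^{-})$ with $x_{i}^{-}=x_{i}^{-1}$ if $x_{i}\neq\mathbb{0}$ and $x_{i}^{-}=\mathbb{0}$ otherwise; for a nonzero row vector the conjugate is the column vector defined analogously; for a nonzero scalar the conjugate is its inverse. *)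

(* Defs.v *)
From Stdlib Require Import Reals ClassicalEpsilon.
From mathcomp Require Import all_boot all_order all_algebra.

Set Implicit Arguments.
Unset Strict Implicit.
Unset Printing Implicit Defensive.

Record TSemifield := {
  carrier :> Type;
  zero : carrier;
  one : carrier;
  add : carrier -> carrier -> carrier;
  mul : carrier -> carrier -> carrier;
  inv : carrier -> carrier;            (* multiplicative inverse on nonzero elements *)
  pow : carrier -> Rdefinitions.R -> carrier; (* real powers of nonzero elements *)
  addA : forall a b c, add a (add b c) = add (add a b) c;
  addC : forall a b, add a b = add b a;
  add0 : forall a, add zero a = a;
  addid : forall a, add a a = a;
  add_sel : forall a b, add a b = a \/ add a b = b;
  mulA : forall a b c, mul a (mul b c) = mul (mul a b) c;
  mulC : forall a b, mul a b = mul b a;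
  mul1 : forall a, mul one a = a;
  mul0 : forall a, mul zero a = zero;
  mulDl : forall a b c, mul (add a b) c = add (mul a c) (mul b c);
  one_nz : one <> zero;
  mul_nz : forall a b, a <> zero -> b <> zero -> mul a b <> zero;
  inv_nz : forall a, a <> zero -> inv a <> zero;
  mulVx : forall a, a <> zero -> mul (inv a) a = one;
  pow_nz : forall a r, a <> zero -> pow a r <> zero;
  pow0 : forall a, a <> zero -> pow a R0 = one;
  pow1 : forall a, a <> zero -> pow a R1 = a;
  powD : forall a r s, a <> zero -> pow a (Rplus r s) = mul (pow a r) (pow a s);
  powM : forall a r s, a <> zero -> pow (pow a r) s = pow a (Rmult r s);
  powMl : forall a b r, a <> zero -> b <> zero ->
            pow (mul a b) r = mul (pow a r) (pow b r)
}.

Section Ops.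
Variable S : TSemifield.

Definition tle (a b : S) : Prop := add a b = b.
Definition tmin (a b : S) : S :=
  if excluded_middle_informative (add a b = b) then a else b.

(* minimum of a (nonempty) finite list; the empty list gives zero (unused) *)
Definition tbigmin (s : seq S) : S :=
  match s with [::] => zero S | a :: s' => foldr tmin a s' end.

Definition tsum (I : finType) (P : pred I) (F : I -> S) : S :=
  \big[@add S/zero S]_(i | P i) F i.

Definition cinv (a : S) : S :=
  if excluded_middle_informative (a = zero S) then zero S else inv a.

Definition tmulmx m n k (A : 'M[S]_(m, n)) (B : 'M[S]_(n, k)) : 'M[S]_(m, k) :=
  \matrix_(i, j) \big[@add S/zero S]_(l < n) mul (A i l) (B l j).

Definition tconj m n (A : 'M[S]_(m, n)) : 'M[S]_(n, m) :=
  \matrix_(i, j) cinv (A j i).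

Variables (M N : nat).

Definition Xmat (x : 'I_M -> S) (p : 'I_N -> Rdefinitions.R) : 'M[S]_(M, N) :=
  \matrix_(i, j) pow (x i) (p j).

Definition ycol (y : 'I_M -> S) : 'M[S]_(M, 1) := \matrix_(i, j) y i.

(* tDelta(p) = (X (y^- X)^-)^- y, a 1x1 matrix, read as a scalar *)
Definition tDelta (x y : 'I_M -> S) (p : 'I_N -> Rdefinitions.R) : S :=
  (tmulmx (tconj (tmulmx (Xmat x p) (tconj (tmulmx (tconj (ycol y)) (Xmat x p)))))
          (ycol y)) ord0 ord0.

Definition tphi (x y : 'I_M -> S) (r : Rdefinitions.R) : S :=
  tsum predT (fun k : 'I_M => mul (inv (y k)) (pow (x k) r)).

Definition tphi_i (x y : 'I_M -> S) (i : 'I_M) (r : Rdefinitions.R) : S :=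
  mul (mul (y i) (pow (x i) (Ropp r))) (tphi x y r).

Definition ordered_partition (I : {ffun 'I_N -> {set 'I_M}}) : bool :=
  [forall j, forall k, (j != k) ==> [disjoint I j & I k]] &&
  (\bigcup_(j < N) I j == [set: 'I_M]).

End Ops.

(* Main.v *)
Require Import Defs.
From Stdlib Require Import Reals.
From mathcomp Require Import all_boot all_order all_algebra.
From Stdlib Require Import ClassicalEpsilon.
From HB Require Import structures.
Set Implicit Arguments.
Unset Strict Implicit.

Section L.
Local Notation zero := Defs.zero.
Local Notation one := Defs.one.
Local Notation add := Defs.add.
Local Notation mul := Defs.mul.
Local Notation inv := Defs.inv.
Local Notation pow := Defs.pow.
Local Notation addA := Defs.addA.
Local Notation addC := Defs.addC.
Local Notation add0 := Defs.add0.
Local Notation addid := Defs.addid.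
Local Notation add_sel := Defs.add_sel.
Local Notation mulA := Defs.mulA.
Local Notation mulC := Defs.mulC.
Local Notation mul1 := Defs.mul1.
Local Notation mul0 := Defs.mul0.
Local Notation mulDl := Defs.mulDl.
Local Notation mul_nz := Defs.mul_nz.
Local Notation inv_nz := Defs.inv_nz.
Local Notation mulVx := Defs.mulVx.
Local Notation pow_nz := Defs.pow_nz.
Local Notation pow0 := Defs.pow0.
Local Notation pow1 := Defs.pow1.
Local Notation powD := Defs.powD.
Local Notation powM := Defs.powM.
Variable SS : TSemifield.
Local Notation S := (carrier SS).
Local Notation tmin := (@Defs.tmin SS).
HB.instance Definition _ := Monoid.isComLaw.Build S (zero SS) (@add SS) (@addA SS) (@addC SS) (@add0 SS).

Lemma tle_refl (a : S) : tle a a. Proof. exact: addid. Qed.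
Lemma tle_trans (a b c : S) : tle a b -> tle b c -> tle a c.
Proof. rewrite /tle => h1 h2; by rewrite -h2 addA h1. Qed.
Lemma tle_anti (a b : S) : tle a b -> tle b a -> a = b.
Proof. rewrite /tle => h1 h2; by rewrite -h1 -{1}h2 addC. Qed.
Lemma tle_addl (a b : S) : tle a (add a b).
Proof. by rewrite /tle addA addid. Qed.
Lemma tle_lub (a b c : S) : tle a c -> tle b c -> tle (add a b) c.
Proof. rewrite /tle => h1 h2; by rewrite -addA h2 h1. Qed.
Lemma tle0 (a : S) : tle (zero SS) a. Proof. exact: add0. Qed.
Lemma tle_nz (a b : S) : tle a b -> a <> zero SS -> b <> zero SS.
Proof. rewrite /tle => h ha hb; apply: ha; rewrite hb in h; by rewrite -(add0 a) addC h. Qed.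
Lemma tle_mulr (a b c : S) : tle a b -> tle (mul a c) (mul b c).
Proof. rewrite /tle => h; by rewrite -mulDl h. Qed.

Lemma big_ub (I : finType) (P : pred I) F i : P i ->
  tle (F i) (\big[@add SS/zero SS]_(j | P j) F j).
Proof. move=> Pi; rewrite (bigD1 i) //=; exact: tle_addl. Qed.
Lemma big_lub (I : finType) (P : pred I) F c : (forall i, P i -> tle (F i) c) ->
  tle (\big[@add SS/zero SS]_(j | P j) F j) c.
Proof. move=> h; apply: (big_ind (fun z => tle z c)); [exact: tle0| move=> u v hu hv; exact: tle_lub hu hv |exact: h]. Qed.
Lemma big_sel (I : finType) (P : pred I) (F : I -> S) i0 : P i0 ->
  exists i, P i /\ \big[@add SS/zero SS]_(j | P j) F j = F i.
Proof.
move=> P0.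
have : \big[@add SS/zero SS]_(j | P j) F j = zero SS \/ exists i, P i /\ \big[@add SS/zero SS]_(j | P j) F j = F i.
  apply: (big_ind (fun z => z = zero SS \/ exists i, P i /\ z = F i)); first by left.
  - move=> a b ha hb; case: (add_sel a b) => ->; by [].
  - by move=> i Pi; right; exists i.
case=> // h; exists i0; split => //; apply: tle_anti; last exact: big_ub.
rewrite h; exact: tle0.
Qed.

Lemma mulV (a : S) : a <> zero SS -> mul a (inv a) = one SS.
Proof. by move=> h; rewrite mulC mulVx. Qed.
Lemma inv_uniq (a b : S) : a <> zero SS -> mul a b = one SS -> b = inv a.
Proof. move=> h e; by rewrite -(mul1 b) -(mulVx h) -mulA e mulC mul1. Qed.
Lemma invM (a b : S) : a <> zero SS -> b <> zero SS -> inv (mul a b) = mul (inv a) (inv b).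
Proof.
move=> ha hb; symmetry; apply: inv_uniq; first exact: mul_nz.
by rewrite mulA -(mulA a) (mulC b) mulA mulV // mul1 mulV.
Qed.
Lemma invK (a : S) : a <> zero SS -> inv (inv a) = a.
Proof. move=> h; symmetry; apply: inv_uniq; [exact: inv_nz| exact: mulVx]. Qed.
Lemma powN (a : S) r : a <> zero SS -> pow a (Ropp r) = inv (pow a r).
Proof. move=> h; apply: inv_uniq; first exact: pow_nz. by rewrite -powD // Rplus_opp_r pow0. Qed.
Lemma tle_inv (a b : S) : a <> zero SS -> b <> zero SS -> tle a b -> tle (inv b) (inv a).
Proof.
move=> ha hb h; have := tle_mulr (mul (inv a) (inv b)) h.
have e1 : mul a (mul (inv a) (inv b)) = inv b by rewrite mulA mulV // mul1.
have e2 : mul b (mul (inv a) (inv b)) = inv a by rewrite (mulC (inv a)) mulA mulV // mul1.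
by rewrite e1 e2.
Qed.

Lemma tmin_l (a b : S) : tle (tmin a b) a.
Proof. rewrite /tmin; case: (excluded_middle_informative (add a b = b)) => h; first exact: tle_refl.
rewrite /tle addC; by case: (add_sel a b). Qed.
Lemma tmin_r (a b : S) : tle (tmin a b) b.
Proof. rewrite /tmin; case: (excluded_middle_informative (add a b = b)) => h //; exact: tle_refl. Qed.
Lemma tmin_in (a b : S) : tmin a b = a \/ tmin a b = b.
Proof. rewrite /tmin; case: (excluded_middle_informative (add a b = b)); by [left|right]. Qed.

Lemma foldr_min (s : seq S) a : List.In (foldr tmin a s) (a :: s) /\
  forall z, List.In z (a :: s) -> tle (foldr tmin a s) z.
Proof.
elim: s => [|b s [IH1 IH2]] /=.
  split; first by left. by move=> z [<-|[]]; apply: tle_refl.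
split.
  case: (tmin_in b (foldr tmin a s)) => ->; first by right; left.
  by case: IH1 => [e|h]; [left|right; right].
move=> z [<-|[<-|h]].
- apply: tle_trans (tmin_r _ _) _; apply: IH2; by left.
- exact: tmin_l.
- apply: tle_trans (tmin_r _ _) _; apply: IH2; by right.
Qed.

Lemma tbigmin_eq (s : seq S) m : List.In m s -> (forall z, List.In z s -> tle m z) ->
  tbigmin s = m.
Proof.
case: s => [[]|a s] hm hz /=; have [h1 h2] := foldr_min s a.
apply: tle_anti; [exact: h2 | exact: hz].
Qed.
Lemma tbigmin_le (s : seq S) z : List.In z s -> tle (tbigmin s) z.
Proof. case: s => [[]|a s] /= h; have [h1 h2] := foldr_min s a; exact: h2. Qed.
Lemma tbigmin_in (s : seq S) : s <> [::] -> List.In (tbigmin s) s.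
Proof. case: s => [//|a s] /= _; have [h1 h2] := foldr_min s a; exact: h1. Qed.

Lemma in_map_seq (T : eqType) (f : T -> S) (s : seq T) z :
  List.In z [seq f j | j <- s] <-> exists j, j \in s /\ z = f j.
Proof.
elim: s => [|a s IH] /=; first by split=> // -[j []].
split.
  case=> [<-|/IH [j [js ->]]]; first by exists a; rewrite mem_head.
  by exists j; rewrite in_cons js orbT.
case=> j []; rewrite in_cons => /orP [/eqP -> ->|js e]; first by left.
by right; apply IH; exists j.
Qed.

Lemma cinvE (a : S) : a <> zero SS -> cinv a = inv a.
Proof. rewrite /cinv => h; by case: (excluded_middle_informative (a = zero SS)). Qed.

Variables (M N : nat) (hM : (0 < M)%N) (hN : (0 < N)%N) (x y : 'I_M -> S)
  (hx : forall i, x i <> zero SS) (hy : forall i, y i <> zero SS)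
  (p : 'I_N -> Rdefinitions.R).

Let phi k := tphi x y (p k).
Let a l k := mul (pow (x l) (p k)) (inv (phi k)).
Let A l := \big[@add SS/zero SS]_(k < N) a l k.

Lemma phi_nz k : phi k <> zero SS.
Proof.
apply: (@tle_nz (mul (inv (y (Ordinal hM))) (pow (x (Ordinal hM)) (p k)))).
  exact: (big_ub (fun m : 'I_M => mul (inv (y m)) (pow (x m) (p k))) (i := Ordinal hM)).
apply: mul_nz; [exact: inv_nz | exact: pow_nz].
Qed.
Lemma a_nz l k : a l k <> zero SS.
Proof. apply: mul_nz; [exact: pow_nz | apply: inv_nz; exact: phi_nz]. Qed.
Lemma A_nz l : A l <> zero SS.
Proof. apply: (@tle_nz (a l (Ordinal hN))); [exact: (big_ub (a l) (i := Ordinal hN))|exact: a_nz]. Qed.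
Lemma key l j : tphi_i x y l (p j) = mul (inv (a l j)) (y l).
Proof.
rewrite /tphi_i /a invM; [|exact: pow_nz|apply: inv_nz; exact: phi_nz].
rewrite invK; last exact: phi_nz.
rewrite powN //; rewrite -/(phi j).
by rewrite [RHS]mulC mulA.
Qed.

Lemma eB k : (tmulmx (tconj (ycol y)) (Xmat x p)) ord0 k = phi k.
Proof.
rewrite /tmulmx mxE /phi /tphi /tsum; apply: eq_big => // m _.
by rewrite !mxE cinvE.
Qed.
Lemma eAl l : (tmulmx (Xmat x p) (tconj (tmulmx (tconj (ycol y)) (Xmat x p)))) l ord0 = A l.
Proof.
rewrite {1}/tmulmx mxE; apply: eq_bigr => k _.
rewrite (_ : tconj _ k ord0 = cinv ((tmulmx (tconj (ycol y)) (Xmat x p)) ord0 k)); last by rewrite /tconj mxE.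
rewrite eB cinvE; last exact: phi_nz.
by rewrite /Xmat mxE.
Qed.

Lemma part1 : tDelta x y p
    = tsum predT (fun i : 'I_M =>
        tbigmin [seq tphi_i x y i (p j) | j <- enum 'I_N]).
Proof.
rewrite /tDelta {1}/tmulmx mxE /tsum.
apply: eq_big => // l _.
rewrite {1}/tconj mxE eAl cinvE; last exact: A_nz.
rewrite /ycol mxE.
have [j0 [_ hj0]] := big_sel (P := fun _ => true) (fun k => a l k) (i0 := Ordinal hN) isT.
symmetry; apply: tbigmin_eq.
  apply/in_map_seq; exists j0; split; first by rewrite mem_enum.
  by rewrite key /A hj0.
move=> z /in_map_seq [j [_ ->]]; rewrite key.
apply: tle_mulr; apply: tle_inv; [exact: a_nz|exact: A_nz|].
exact: (big_ub (fun k => a l k) (i := j)).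
Qed.

Let m i := tbigmin [seq tphi_i x y i (p j) | j <- enum 'I_N].
Let V (Ip : {ffun 'I_N -> {set 'I_M}}) :=
  tsum predT (fun j : 'I_N => tsum (fun i => i \in Ip j) (fun i => tphi_i x y i (p j))).
Let L := tsum predT m.

Lemma m_in i : exists j, m i = tphi_i x y i (p j).
Proof.
have : List.In (m i) [seq tphi_i x y i (p j) | j <- enum 'I_N].
  apply: tbigmin_in.
  case: (enum 'I_N) (size_enum_ord N) => [|//] /= e.
  by move: hN; rewrite -e.
by case/in_map_seq => j [_ e]; exists j.
Qed.
Lemma m_le i j : tle (m i) (tphi_i x y i (p j)).
Proof. apply: tbigmin_le; apply/in_map_seq; exists j; by rewrite mem_enum. Qed.

Lemma LleV Ip : ordered_partition Ip -> tle L (V Ip).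
Proof.
case/andP => _ /eqP hU; apply: big_lub => i _.
have : i \in \bigcup_(j < N) Ip j by rewrite hU inE.
case/bigcupP => j _ hij.
apply: tle_trans (m_le i j) _.
apply: tle_trans (_ : tle _ (tsum (fun i => i \in Ip j) (fun i => tphi_i x y i (p j)))) _.
  exact: (big_ub (fun i => tphi_i x y i (p j)) hij).
exact: (big_ub (fun j => tsum (fun i => i \in Ip j) (fun i => tphi_i x y i (p j))) (i := j)).
Qed.

Lemma part2 : L = tbigmin [seq V Ip | Ip : {ffun 'I_N -> {set 'I_M}} <- enum (@ordered_partition M N)].
Proof.
pose jf i := proj1_sig (constructive_indefinite_description _ (m_in i)).
have hjf i : m i = tphi_i x y i (p (jf i)) := proj2_sig (constructive_indefinite_description _ (m_in i)).
pose Ip0 : {ffun 'I_N -> {set 'I_M}} := [ffun j => [set i | jf i == j]].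
have hP : ordered_partition Ip0.
  apply/andP; split.
    apply/forallP => j; apply/forallP => k; apply/implyP => njk.
    rewrite disjoint_subset; apply/subsetP => i; rewrite !ffunE !inE => /eqP e.
    by rewrite e.
  apply/eqP/setP => i; rewrite inE; apply/bigcupP; exists (jf i) => //.
  by rewrite ffunE inE.
have eV : V Ip0 = L.
  apply: tle_anti; last exact: LleV.
  apply: big_lub => j _; apply: big_lub => i.
  rewrite ffunE inE => /eqP <-; rewrite -hjf.
  exact: (big_ub m (i := i)).
symmetry; apply: tbigmin_eq.
  apply/in_map_seq; exists Ip0; split; last by rewrite eV.
  by rewrite mem_enum.
move=> z /in_map_seq [Ip [hI ->]]; apply: LleV.
by move: hI; rewrite mem_enum.
Qed.
End L.

Theorem mainTheorem1 (S : TSemifield) (M N : nat)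
  (hM : (0 < M)%N) (hN : (0 < N)%N)
  (x y : 'I_M -> S)
  (hx : forall i, x i <> zero S) (hy : forall i, y i <> zero S)
  (p : 'I_N -> Rdefinitions.R) :
  tDelta x y p
    = tsum predT (fun i : 'I_M =>
        tbigmin [seq tphi_i x y i (p j) | j <- enum 'I_N])
  /\
  tsum predT (fun i : 'I_M =>
        tbigmin [seq tphi_i x y i (p j) | j <- enum 'I_N])
    = tbigmin [seq tsum predT (fun j : 'I_N =>
                      tsum (fun i => i \in Ip j) (fun i => tphi_i x y i (p j)))
              | Ip : {ffun 'I_N -> {set 'I_M}} <- enum (@ordered_partition M N)].
Proof.
split; [exact: (part1 hM hN hx hy) | exact: (part2 hN)].
Qed.
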